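(* Let $X$ be a random vector in $\mathbb{R}^n$. Then $\mathbb{P}\big(X\in\mathcal{C}_n(X)\big)=1$.
   Context: For a random vector $X$ in $\mathbb{R}^n$ and an integer $m\ge0$, the $m$-dimensional mould $\mathcal{C}_m(X)$ is the set of all $x\in\mathbb{R}^n$ such that $\liminf_{\epsilon\to0^+}\mathbb{P}(\|X-x\|_2<\epsilon)/\epsilon^m>0$. (It is a Borel subset of $\mathbb{R}^n$.) *)

(* Defs.v *)
From HB Require Import structures.
From mathcomp Require Import all_boot all_order all_algebra.
From mathcomp Require Import all_classical all_reals all_analysis.
Set Implicit Arguments. Unset Strict Implicit. Unset Printing Implicit Defensive.
Import Order.TTheory GRing.Theory Num.Theory.
Import numFieldTopology.Exports numFieldNormedType.Exports.
Local Open Scope classical_set_scope.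
Local Open Scope ring_scope.

Definition euclid_norm (R : realType) (n : nat) (v : 'rV[R]_n) : R :=
  Num.sqrt (\sum_(i < n) (v ord0 i) ^+ 2).

(* A random vector in R^n on (T, P): every coordinate is measurable
   (equivalently, X is Borel measurable into R^n). *)
Definition random_vector (d : measure_display) (T : measurableType d)
  (R : realType) (n : nat) (X : T -> 'rV[R]_n) : Prop :=
  forall i : 'I_n, measurable_fun setT (fun t => X t ord0 i).

Definition mould (d : measure_display) (T : measurableType d) (R : realType)
  (P : probability T R) (n : nat) (X : T -> 'rV[R]_n) (m : nat)
  : set 'rV[R]_n :=
  [set x | (0 < limf_einf
     (fun eps : R => (P [set t | (euclid_norm (X t - x) < eps)%R]
                      * ((eps ^+ m)^-1)%:E)%E)
     (0 : R)^'+)%E].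

(* Main.v *)
Require Import Defs.
From HB Require Import structures.
From mathcomp Require Import all_boot all_order all_algebra.
From mathcomp Require Import all_classical all_reals all_analysis.
From mathcomp Require Import measurable_realfun zify ring lra.
Import Order.TTheory GRing.Theory Num.Theory.
Import numFieldTopology.Exports numFieldNormedType.Exports.
Local Open Scope classical_set_scope.
Local Open Scope ring_scope.
Set Implicit Arguments. Unset Strict Implicit. Unset Printing Implicit Defensive.

Lemma mset_lt d' (U : measurableType d') (R : realType) (f : U -> R) c : measurable_fun setT f -> measurable [set t | f t < c].
Proof.
move=> mf; have := measurable_fun_ltr mf (measurable_cst c) measurableT (Y:=[set true]).
rewrite setTI; apply => //.
Qed.



Definition w (R : realType) (k : nat) : R := ((2:R) ^+ k)^-1.

Lemma w_gt0 (R : realType) k : 0 < w R k.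
Proof. by rewrite /w invr_gt0 exprn_gt0. Qed.

Lemma wS (R : realType) k : w R k.+1 = w R k / 2.
Proof. by rewrite /w exprSr invfM. Qed.

Lemma w_le (R : realType) j k : (j <= k)%N -> w R k <= w R j.
Proof.
move=> /subnK <-; elim: (k - j)%N => [|m IH] //=.
rewrite addSn wS (le_trans _ IH) // ler_pdivrMr // ler_peMr ?(ltW (w_gt0 _ _)) //.
by rewrite ler1n.
Qed.

Lemma w_small (R : realType) (e : R) : 0 < e -> w R (Num.bound e^-1) < e.
Proof.
move=> e0; have := @upper_nthrootP R e^-1 (Num.bound e^-1) (leqnn _).
move=> h; rewrite /w -[e in _ < e]invrK ltf_pV2 ?posrE ?exprn_gt0 ?invr_gt0 //.
Qed.

Lemma find_k (R : realType) (y : R) k0 : 0 < y -> y < w R k0 ->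
  exists k, (k0 <= k)%N /\ w R k.+1 <= y < w R k.
Proof.
move=> y0 yk0.
have : w R (k0 + Num.bound y^-1) <= y.
  apply: le_trans (ltW (w_small y0)); apply: w_le; exact: leq_addl.
elim: (Num.bound y^-1) => [|j IH]; first by rewrite addn0 leNgt yk0.
case: (ltP y (w R (k0 + j))) => hy h.
  by exists (k0 + j)%N; rewrite leq_addr -addnS h.
exact: IH.
Qed.


Lemma mset_ge d' (U : measurableType d') (R : realType) (f : U -> R) c :
  measurable_fun setT f -> measurable [set t | c <= f t].
Proof.
move=> mf; have -> : [set t | c <= f t] = ~` [set t | f t < c].
  by apply/seteqP; split => t /=; rewrite leNgt => /negP.
exact/measurableC/mset_lt.
Qed.

Lemma floor2 (R : realType) (y : R) : Num.floor (2 * y) = 2 * Num.floor y \/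
  Num.floor (2 * y) = 2 * Num.floor y + 1.
Proof.
have h1 : 2 * Num.floor y <= Num.floor (2 * y).
  by rewrite floor_ge_int intrM ler_wpM2l // floor_le.
have h2 : Num.floor (2 * y) < 2 * Num.floor y + 2.
  rewrite ltNge floor_ge_int; apply/negP => h.
  have := floor_itv y => /andP [_ hy].
  have e : 2 * Num.floor y + 2 = 2 * (Num.floor y + 1) by lia.
  move: h; rewrite e intrM.
  have -> : ((2:int)%:~R : R) = 2 by [].
  by rewrite ler_pM2l // leNgt hy.
lia.
Qed.


Lemma le_all_inv (R : realType) (x C : R) :
  (forall N : nat, x <= C / N.+1%:R) -> x <= 0.
Proof.
move=> H; rewrite leNgt; apply/negP => x0.
have := H (Num.bound (C / x)).
have hb : C / x < (Num.bound (C / x))%:R.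
  apply: (le_lt_trans (ler_norm _)); exact: unstable.ltr_norm_bound.
rewrite ler_pdivlMr ?ltr0Sn // leNgt => /negP; apply.
rewrite -ltr_pdivrMl // mulrC.
by apply: lt_le_trans hb _; rewrite ler_nat.
Qed.

Section S.
Context d (T : measurableType d) (R : realType) (P : probability T R) (n : nat)
  (X : T -> 'rV[R]_n) (hX : random_vector X).

Definition sumsq (x y : 'rV[R]_n) := \sum_(i < n) (x ord0 i - y ord0 i) ^+ 2.

Lemma norm_lt (x y : 'rV[R]_n) r :
  (euclid_norm (x - y) < r) = (0 < r) && (sumsq x y < r ^+ 2).
Proof.
rewrite /euclid_norm /sumsq.
under eq_bigr do rewrite !mxE.
case: (ltP 0 r) => r0 /=.
  rewrite -(@ltr_sqrt _ _ (r ^+ 2) (exprn_gt0 2 r0)) sqrtr_sqr ger0_norm //; last exact: ltW.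

by apply/negbTE; rewrite -leNgt (le_trans r0) ?sqrtr_ge0.
Qed.

Lemma msumsq d' (U : measurableType d') (f g : U -> 'rV[R]_n) : (forall i, measurable_fun setT (fun t => f t ord0 i)) ->
 (forall i, measurable_fun setT (fun t => g t ord0 i)) ->
  measurable_fun setT (fun t => sumsq (f t) (g t)).
Proof.
move=> mf mg; apply: measurable_sum => i; apply: measurable_funX.
exact: measurable_funB.
Qed.

Definition bset (x : 'rV[R]_n) r := [set s | euclid_norm (X s - x) < r].

Lemma mbset x r : measurable (bset x r).
Proof.
rewrite /bset; case: (ltP 0 r) => r0.
  rewrite (_ : [set _ | _] = [set s | sumsq (X s) x < r ^+ 2]).
    apply: (mset_lt (f := fun s => sumsq (X s) x)); apply: msumsq => // i; exact: measurable_cst.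
  by apply/seteqP; split => s /=; rewrite norm_lt r0.
rewrite (_ : [set _ | _] = set0) //.
by apply/seteqP; split => s //=; rewrite norm_lt ltNge r0.
Qed.

Lemma mfun_ball r : measurable_fun setT (fun t => P (bset (X t) r)).
Proof.
case: (ltP 0 r) => r0.
  pose A := [set p : T * T | sumsq (X p.2) (X p.1) < r ^+ 2].
  have mA : measurable A.
    apply: mset_lt; apply: msumsq => i.
      exact: (measurableT_comp (hX i) measurable_snd).
    exact: (measurableT_comp (hX i) measurable_fst).
  have := measurable_fun_xsection P mA.
  apply: eq_measurable_fun => t _ /=; congr (P _).
  by apply/seteqP; split => s /=; rewrite /xsection /= inE /= /A /bset /= norm_lt r0.
rewrite (_ : (fun t => _) = fun _ => P set0).
  exact: measurable_cst.
apply/funext => t; congr (P _).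
by apply/seteqP; split => s //=; rewrite /bset /= norm_lt ltNge r0.
Qed.


Definition mu x r := fine (P (bset x r)).

Lemma PbE x r : P (bset x r) = (mu x r)%:E.
Proof. by rewrite fineK // fin_num_measure //; exact: mbset. Qed.

Lemma mu_ge0 x r : 0 <= mu x r.
Proof. by rewrite -lee_fin -PbE measure_ge0. Qed.

Lemma mu_le x r1 r2 : r1 <= r2 -> mu x r1 <= mu x r2.
Proof.
move=> r12; rewrite -lee_fin -!PbE; apply: le_measure; rewrite ?inE; try exact: mbset.
by move=> s; rewrite /bset /= => h; apply: lt_le_trans r12.
Qed.

Lemma mouldE x : mould P X n x <->
  exists c, 0 < c /\ exists e, 0 < e /\ forall y, 0 < y < e -> c <= mu x y / y ^+ n.
Proof.
rewrite /mould /=.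
have -> : (fun eps : R => (P [set t | (euclid_norm (X t - x) < eps)%R] * ((eps ^+ n)^-1)%:E)%E)
   = fun eps => (mu x eps / eps ^+ n)%:E.
  by apply/funext => eps; rewrite -[[set t | _]]/(bset x eps) PbE.
rewrite limf_einfE; split.
  move=> /ereal_sup_gt [_ [V HV <-]] h0.
  move: HV => /nbhs_ballP [e /= e0 He].
  have HVy : forall y, 0 < y < e -> V y.
    move=> y /andP [y0 ye]; apply: He => //=.
    by rewrite /ball /= sub0r normrN gtr0_norm.
  case E: (ereal_inf _) h0 => [c| |] h0.
  - exists c; split; first by rewrite -lte_fin.
    exists e; split => // y /HVy Vy; rewrite -lee_fin -E.
    by apply: ereal_inf_lbound; exists y.
  - exists 1; split => //; exists e; split => // y /HVy Vy.
    have : (ereal_inf [set (mu x eps / eps ^+ n)%:E | eps in V] <= (mu x y / y ^+ n)%:E)%E.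
      by apply: ereal_inf_lbound; exists y.
    by rewrite E.
  - by [].
move=> [c [c0 [e [e0 H]]]].
apply: (@lt_le_trans _ _ c%:E); first by rewrite lte_fin.
apply: (@le_trans _ _ (ereal_inf [set (mu x eps / eps ^+ n)%:E | eps in [set y | 0 < y < e]])).
  by apply: le_ereal_inf_tmp => _ [y Vy <-]; rewrite lee_fin; apply: H.
apply: ereal_sup_ubound; exists [set y | 0 < y < e] => //.
near=> y; apply/andP; split; near: y; [exact: nbhs_right_gt | exact: nbhs_right_lt].
Unshelve. all: by end_near.
Qed.


Lemma mouldE2 x : mould P X n x <->
  exists N k0, forall k, (k0 <= k)%N -> w R k ^+ n / N.+1%:R <= mu x (w R k).
Proof.
rewrite mouldE; split.
  move=> [c [c0 [e [e0 H]]]].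
  exists (Num.bound c^-1), (Num.bound e^-1) => k kk0.
  have wk0 := w_gt0 R k.
  have := H (w R k); rewrite wk0 /= (le_lt_trans (w_le R kk0) (w_small e0)).
  move=> /(_ isT); rewrite ler_pdivlMr ?exprn_gt0 // => h.
  apply: le_trans h; rewrite mulrC ler_wpM2r ?exprn_ge0 ?(ltW wk0) //.
  rewrite -[X in _ <= X](invrK c) lef_pV2 ?posrE ?invr_gt0 ?ltr0Sn //.
  apply: ltW; apply: lt_le_trans (archi_boundP _) _; first by rewrite invr_ge0 ltW.
  by rewrite ler_nat.
move=> [N [k0 H]].
exists ((2 ^+ n * N.+1%:R)^-1); split.
  by rewrite invr_gt0 mulr_gt0 ?exprn_gt0 ?ltr0Sn.
exists (w R k0); split; first exact: w_gt0.
move=> y /andP [y0 yk0]; have [k [kk0 /andP [hk1 hk]]] := find_k y0 yk0.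
rewrite ler_pdivlMr ?exprn_gt0 //.
apply: (le_trans _ (mu_le x hk1)); apply: le_trans (H _ (leqW kk0)).
rewrite wS expr_div_n invfM.
have -> : 2 ^- n / N.+1%:R * y ^+ n = y ^+ n * (2 ^- n / N.+1%:R) by rewrite mulrC.
have -> : w R k ^+ n / 2 ^+ n / N.+1%:R = w R k ^+ n * (2 ^- n / N.+1%:R) by rewrite mulrA.
rewrite ler_wpM2r ?mulr_ge0 ?invr_ge0 ?ler0n ?exprn_ge0 //.
by rewrite lerXn2r ?nnegrE ?ltW // w_gt0.
Qed.


Lemma mfun_mu r : measurable_fun setT (fun t => mu (X t) r).
Proof. exact: (measurableT_comp (fine_measurable measurableT) (mfun_ball r)). Qed.

Definition Gp := [set t | exists N k0, forall k, (k0 <= k)%N ->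
   w R k ^+ n / N.+1%:R <= mu (X t) (w R k)].

Lemma G_eq : [set t | mould P X n (X t)] = Gp.
Proof. by apply/seteqP; split => t /= /mouldE2. Qed.

Lemma mGp : measurable Gp.
Proof.
have -> : Gp = \bigcup_N \bigcup_k0 \bigcap_k
   (if (k0 <= k)%N then ~` [set t | mu (X t) (w R k) < w R k ^+ n / N.+1%:R] else setT).
  apply/seteqP; split => t /=.
    move=> [N [k0 H]]; exists N => //; exists k0 => // k _.
    by case: ifPn => // /H /= h; apply/negP; rewrite -leNgt.
  move=> [N _ [k0 _ H]]; exists N, k0 => k kk0.
  by have := H k I; rewrite kk0 /= => /negP; rewrite -leNgt.
apply: bigcupT_measurable => N; apply: bigcupT_measurable => k0.
apply: bigcapT_measurable => k; case: ifPn => // _.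
by apply: measurableC; apply: (mset_lt (f := fun t => mu (X t) (w R k))); exact: mfun_mu.
Qed.


Definition pw j : R := 2 ^+ j.
Definition Cell j (z : 'I_n -> int) :=
  [set s | forall i, Num.floor (pw j * X s ord0 i) = z i].
Definition cidx j t : 'I_n -> int := fun i => Num.floor (pw j * X t ord0 i).

Lemma Cell_self j t : Cell j (cidx j t) t.
Proof. by []. Qed.

Lemma Cell_eq j z t : Cell j z t -> Cell j (cidx j t) = Cell j z.
Proof. by move=> h; apply/seteqP; split => s /= hs i; rewrite hs /cidx h. Qed.

Lemma mCell j z : measurable (Cell j z).
Proof.
have -> : Cell j z = \bigcap_(i in [set: 'I_n])
   ([set s | (z i)%:~R <= pw j * X s ord0 i] `&` [set s | pw j * X s ord0 i < (z i + 1)%:~R]).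
  apply/seteqP; split => s /= h.
    by move=> i _; move: (h i) => /eqP; rewrite floor_eq => /andP[].
  by move=> i; apply/eqP; rewrite floor_eq; have [/= -> ->] := h i I.
apply: fin_bigcap_measurable => // i _.
have mf : measurable_fun setT (fun s => pw j * X s ord0 i).
  exact: (measurable_funM (measurable_cst _) (hX i)).
by apply: measurableI; [apply: mset_ge | apply: mset_lt].
Qed.

Definition child (z : 'I_n -> int) (b : {ffun 'I_n -> bool}) : 'I_n -> int :=
  fun i => 2 * z i + (nat_of_bool (b i))%:Z.

Definition bsel j (z : 'I_n -> int) t : {ffun 'I_n -> bool} :=
  [ffun i => Num.floor (pw j.+1 * X t ord0 i) != 2 * z i].

Lemma Cell_child j z t : Cell j z t -> Cell j.+1 (child z (bsel j z t)) t.
Proof.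
move=> h i; rewrite /child /bsel ffunE.
have -> : pw j.+1 * X t ord0 i = 2 * (pw j * X t ord0 i) by rewrite /pw exprS mulrA.
case: (floor2 (pw j * X t ord0 i)) => ->; rewrite (h i).
  by rewrite eqxx /= addr0.
have -> : (2 * z i + 1 != 2 * z i) = true by apply/negP => /eqP; lia.
by [].
Qed.

Lemma pw_gt0 j : 0 < pw j.
Proof. exact: exprn_gt0. Qed.

Lemma Cell_diam j z s t i : Cell j z s -> Cell j z t ->
  `|X s ord0 i - X t ord0 i| < w R j.
Proof.
move=> hs ht.
have := floor_itv (pw j * X s ord0 i); rewrite (hs i) intrD => /andP [h1 h2].
have := floor_itv (pw j * X t ord0 i); rewrite (ht i) intrD => /andP [h3 h4].
have h : `|pw j * X s ord0 i - pw j * X t ord0 i| < 1.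
  rewrite ltr_norml; apply/andP; split; lra.
rewrite -mulrBr normrM (gtr0_norm (pw_gt0 j)) in h.
by rewrite /w -/(pw j) -[_^-1]mul1r ltr_pdivlMr ?pw_gt0 // mulrC.
Qed.

Lemma n_lt : (n%:R : R) < (2 ^+ n) ^+ 2.
Proof.
rewrite -natrX -natrX ltr_nat -expnM.
apply: leq_trans (ltn_expl n (ltnSn 1)) _.
by apply: leq_pexp2l => //; rewrite muln2 -addnn leq_addr.
Qed.

Lemma Cell_ball k t : Cell (k + n) (cidx (k + n) t) `<=` bset (X t) (w R k).
Proof.
move=> s hs; rewrite /bset /= norm_lt w_gt0 /=.
apply: (@le_lt_trans _ _ (n%:R * w R (k + n) ^+ 2)).
  apply: (@le_trans _ _ (\sum_(i < n) w R (k + n) ^+ 2)); last first.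
    by rewrite sumr_const card_ord mulr_natl.
  apply: ler_sum => i _.
  rewrite -real_normK ?num_real // lerXn2r ?nnegrE ?normr_ge0 ?(ltW (w_gt0 _ _)) //.
  exact/ltW/(Cell_diam i hs (Cell_self _ _)).
have -> : w R (k + n) = w R k * w R n by rewrite /w exprD invfM.
rewrite exprMn mulrA mulrC mulrA gtr_pMl ?exprn_gt0 ?w_gt0 //.
by rewrite /w exprVn mulrC ltr_pdivrMr ?exprn_gt0 // mul1r n_lt.
Qed.


Lemma cover_le (I : eqType) (s : seq I) (F : I -> set T) (c : R) :
  (forall i, measurable (F i)) -> forall A, measurable A ->
  (forall t, A t -> exists2 i, i \in s & F i t) ->
  (forall i, P (A `&` F i) <= c%:E)%E -> (P A <= (c *+ size s)%:E)%E.
Proof.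
move=> mF; elim: s => [|i s IH] A mA cov hc.
  have -> : A = set0 by apply/seteqP; split => t // /cov [].
  by rewrite measure0.
have mAi : measurable (A `&` F i) by exact: measurableI.
have mAr : measurable (A `&` ~` F i) by apply: measurableI => //; exact: measurableC.
apply: (@le_trans _ _ (P (A `&` F i) + P (A `&` ~` F i))%E).
  apply: le_trans (measureU2 _ mAi mAr).
  apply: le_measure; rewrite ?inE //; first exact: measurableU.
  by move=> t At; case: (pselect (F i t)) => h; [left | right].
rewrite /= mulrS EFinD; apply: leeD => //.
apply: IH => //.
  move=> t [At nFi]; have [j] := cov t At; rewrite in_cons => /orP [/eqP ->|js] Fj //.
  by exists j.
move=> j; apply: le_trans (hc j); apply: le_measure; rewrite ?inE //.
- by apply: measurableI => //.
- by apply: measurableI.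
- by move=> t [[]].
Qed.

Definition cellbad (δ : R) k t := (P (Cell k (cidx k t)) < (δ * w R k ^+ n)%:E)%E.

Lemma doob (δ : R) : 0 <= δ -> forall m j z A, measurable A -> A `<=` Cell j z ->
  (forall t, A t -> exists k, (j <= k < j + m)%N /\ cellbad δ k t) ->
  (P A <= (δ * w R j ^+ n)%:E)%E.
Proof.
move=> δ0; elim => [|m IH] j z A mA sA hA.
  have -> : A = set0.
    by apply/seteqP; split => t // /hA [k [/andP [h1 h2] _]]; rewrite addn0 in h2; lia.
  by rewrite measure0 lee_fin; apply: mulr_ge0 => //; apply: exprn_ge0; exact: ltW (w_gt0 _ _).
case: (ltP (P (Cell j z)) (δ * w R j ^+ n)%:E) => hb.
  apply: le_trans (ltW hb); apply: le_measure; rewrite ?inE //; exact: mCell.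
have := @cover_le _ (enum {ffun 'I_n -> bool}) (fun b => Cell j.+1 (child z b))
   (δ * w R j.+1 ^+ n) (fun b => mCell _ _) A mA.
rewrite -cardE card_ffun card_bool card_ord.
have -> : δ * w R j.+1 ^+ n *+ (2 ^ n)%N = δ * w R j ^+ n.
  by rewrite -mulr_natr natrX wS expr_div_n -mulrA divfK // expf_neq0.
apply.
  by move=> t At; exists (bsel j z t); [rewrite mem_enum | exact: Cell_child (sA t At)].
move=> b; apply: (IH j.+1 (child z b)).
- exact: measurableI (mCell _ _).
- by move=> t [].
move=> t [At _]; have [k [/andP [h1 h2] hk]] := hA t At.
exists k; split => //.
case: (ltngtP j k) h1 => // [jk|jk] _.
  by apply/andP; split => //; rewrite addSnnS.
move: hk; rewrite /cellbad -jk (Cell_eq (sA t At)) => hk.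
by move: hb; rewrite leNgt hk.
Qed.


Definition box (M : nat) := [set t | forall i, - (M%:R) <= X t ord0 i < (M%:R : R)].

Lemma mbox M : measurable (box M).
Proof.
have -> : box M = \bigcap_(i in [set: 'I_n])
   ([set s | - (M%:R) <= X s ord0 i] `&` [set s | X s ord0 i < M%:R]).
  apply/seteqP; split => s /= h.
    by move=> i _; move: (h i) => /andP[].
  by move=> i; have [/= -> ->] := h i I.
apply: fin_bigcap_measurable => // i _.
by apply: measurableI; [apply: mset_ge | apply: mset_lt]; exact: hX.
Qed.

Lemma level0 (δ : R) m M A : 0 <= δ -> measurable A -> A `<=` box M ->
  (forall t, A t -> exists k, (k < m)%N /\ cellbad δ k t) ->
  (P A <= (δ * ((2 * M) ^ n)%N%:R)%:E)%E.
Proof.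
move=> δ0 mA sA hA.
have := @cover_le _ (enum {ffun 'I_n -> 'I_(2 * M)})
   (fun f => Cell 0 (fun i => (f i)%:Z - M%:Z)) (δ * w R 0 ^+ n) (fun b => mCell _ _) A mA.
rewrite -cardE card_ffun !card_ord /w expr0 invr1 expr1n mulr1 mulr_natr.
apply.
  move=> t At.
  have hb := sA t At.
  have hlt : forall i, (absz (Num.floor (X t ord0 i) + M%:Z)%R < 2 * M)%N.
    move=> i; have /andP [h1 h2] := hb i.
    have g1 : - (M%:Z) <= Num.floor (X t ord0 i) by rewrite floor_ge_int mulrNz.
    have g2 : Num.floor (X t ord0 i) < M%:Z by rewrite floor_lt_int.
    lia.
  exists [ffun i => Ordinal (hlt i)]; first by rewrite mem_enum.
  move=> i /=; rewrite ffunE /= /pw expr0 mul1r.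
  have /andP [h1 _] := hb i.
  have g1 : - (M%:Z) <= Num.floor (X t ord0 i) by rewrite floor_ge_int mulrNz.
  lia.
move=> f; have := doob δ0 (m := m) (j := 0) (z := fun i => (f i)%:Z - M%:Z) (A := A `&` Cell 0 (fun i => (f i)%:Z - M%:Z)).
rewrite /w expr0 invr1 expr1n mulr1; apply.
- exact: measurableI (mCell _ _).
- by move=> t [].
move=> t [At _]; have [k [km hk]] := hA t At.
by exists k; split.
Qed.


Lemma null_box N M :
  (P (~` Gp `&` box M) <= ((2 ^+ n) ^+ n / N.+1%:R * ((2 * M) ^ n)%N%:R)%:E)%E.
Proof.
set δ := (2 ^+ n) ^+ n / N.+1%:R.
have δ0 : 0 <= δ by rewrite /δ divr_ge0 ?exprn_ge0.
pose B k := [set t | mu (X t) (w R k) < w R k ^+ n / N.+1%:R].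
have mB : forall k, measurable (B k).
  by move=> k; apply: (mset_lt (f := fun t => mu (X t) (w R k))); exact: mfun_mu.
pose E m := box M `&` \bigcup_(k in [set k | (k < m)%N]) B k.
have mE : forall m, measurable (E m).
  by move=> m; apply: measurableI; [exact: mbox | exact: bigcup_measurable].
have ndE : nondecreasing_seq E.
  move=> a b ab; apply/subsetPset => t [Bt [k /= ka h]]; split => //.
  by exists k => //=; apply: leq_trans ab.
have hE : forall m, (P (E m) <= (δ * ((2 * M) ^ n)%N%:R)%:E)%E.
  move=> m; apply: (level0 (m := (m + n)%N)) => //; first by move=> t [].
  move=> t [_ [k /= km hk]]; exists (k + n)%N; split; first by rewrite ltn_add2r.
  rewrite /cellbad; apply: (@le_lt_trans _ _ (P (bset (X t) (w R k)))).
    by apply: le_measure; rewrite ?inE; [exact: mCell | exact: mbset | exact: Cell_ball].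
  rewrite PbE lte_fin; apply: (lt_le_trans hk).
  rewrite /δ /w exprD invfM exprMn.
  have e : (2 ^+ n) ^+ n * (2 ^- n) ^+ n = 1 :> R.
    by rewrite -exprMn mulfV ?expr1n // expf_neq0.
  have -> : (2 ^+ n) ^+ n / N.+1%:R * (2 ^- k ^+ n * 2 ^- n ^+ n) =
    2 ^- k ^+ n / N.+1%:R * ((2 ^+ n) ^+ n * (2 ^- n) ^+ n) :> R by ring.
  by rewrite e mulr1.
have mU : measurable (\bigcup_m E m) by exact: bigcupT_measurable.
have hc := @nondecreasing_cvg_mu _ _ _ P E mE mU ndE.
apply: (@le_trans _ _ (P (\bigcup_m E m))).
  apply: le_measure; rewrite ?inE //.
    by apply: measurableI; [apply: measurableC; exact: mGp | exact: mbox].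
  move=> t [nG Bt]; apply: contrapT => hn; apply: nG.
  exists N, 0%N => k _; rewrite leNgt; apply/negP => hk.
  by apply: hn; exists k.+1 => //; split => //; exists k => /=.
rewrite -(cvg_lim _ hc) //; apply: lime_le; first exact: (cvgP _ hc).
by apply: nearW => m; exact: hE.
Qed.

Lemma null_nG : P (~` Gp) = 0%E.
Proof.
have mnG : measurable (~` Gp) by apply: measurableC; exact: mGp.
have h0 : forall M, P (~` Gp `&` box M) = 0%E.
  move=> M; have mS : measurable (~` Gp `&` box M) by apply: measurableI => //; exact: mbox.
  rewrite -(fineK (fin_num_measure _ _ mS)); congr (_%:E).
  apply/eqP; rewrite eq_le; apply/andP; split; last by rewrite fine_ge0 ?measure_ge0.
  apply: (le_all_inv (C := (2 ^+ n) ^+ n * ((2 * M) ^ n)%N%:R)) => N.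
  rewrite -lee_fin fineK ?fin_num_measure //; apply: le_trans (null_box N M) _.
  by rewrite lee_fin mulrAC.
apply/eqP; rewrite eq_le measure_ge0 andbT.
apply: (@le_trans _ _ (\sum_(0 <= M <oo) P (~` Gp `&` box M))%E).
  apply: measure_sigma_subadditive => //.
    by move=> M; apply: measurableI => //; exact: mbox.
  move=> t nGt; exists (Num.bound (\sum_(i < n) `|X t ord0 i|)) => //; split => //.
  move=> i.
  have : `|X t ord0 i| < (Num.bound (\sum_(i < n) `|X t ord0 i|))%:R.
    apply: le_lt_trans (unstable.ltr_norm_bound _).
    apply: le_trans (ler_norm _).
    by rewrite (bigD1 i) //= lerDl sumr_ge0.
  by rewrite ltr_norml => /andP [h1 h2]; rewrite (ltW h1) h2.
by rewrite eseries0.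
Qed.

Lemma PGp : P Gp = 1%E.
Proof.
have := null_nG; rewrite probability_setC; last exact: mGp.
rewrite -(fineK (fin_num_measure _ _ mGp)) -EFinB => /eqP; rewrite eqe subr_eq0 => /eqP <-.
by [].
Qed.

End S.

Unset Implicit Arguments.
Theorem mainTheorem5 (d : measure_display) (T : measurableType d)
  (R : realType) (P : probability T R) (n : nat) (X : T -> 'rV[R]_n)
  (hX : random_vector X) :
  measurable [set t | mould P X n (X t)] /\
  P [set t | mould P X n (X t)] = 1%E.
Proof.
rewrite (G_eq P hX); split; [exact: mGp | exact: PGp].
Qed.
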